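(* Let $\psi:[0,\infty)\to(-\infty,0]$ be a monotonically increasing (non-decreasing) function and let $p$ be a seminorm on the locally convex space $E$ over $K$. Then the function $\phi:E\to\mathbb R$, $\phi(x)=\psi(p(x))$, is convex.
   Context: $K$ is a field complete with respect to a non-trivial non-archimedean absolute value, $B_K=\{x\in K:|x|\le1\}$. Seminorms are non-archimedean: $p(x+y)\le\max(p(x),p(y))$ and $p(\lambda x)=|\lambda|p(x)$. A function $\phi:E\to\mathbb R$ is convex if for all $n$, $x_1,\dots,x_n\in E$ and $\lambda_1,\dots,\lambda_n\in B_K$ with $\sum\lambda_i=1$ one has $\phi(\sum\lambda_ix_i)\le\max_i|\lambda_i|\phi(x_i)$. *)

(* Defs.v *)
From HB Require Import structures.
From mathcomp Require Import all_boot all_order all_algebra.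
From mathcomp Require Import reals.
Set Implicit Arguments. Unset Strict Implicit. Unset Printing Implicit Defensive.
Import Order.TTheory GRing.Theory Num.Theory.
Local Open Scope ring_scope.

Record complete_nonarch_abs (K : fieldType) (R : realType) (abs : K -> R) : Prop := {
  abs_ge0 : forall x, 0 <= abs x;
  abs_eq0 : forall x, abs x = 0 <-> x = 0;
  absM : forall x y, abs (x * y) = abs x * abs y;
  abs_ultra : forall x y, abs (x + y) <= Num.max (abs x) (abs y);
  abs_nontrivial : exists x, abs x != 0 /\ abs x != 1;
  abs_complete : forall u : nat -> K,
    (forall e : R, 0 < e -> exists N, forall m n, (N <= m)%N -> (N <= n)%N ->
        abs (u m - u n) < e) ->
    exists l, forall e : R, 0 < e -> exists N, forall n, (N <= n)%N ->
        abs (u n - l) < e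
}.

Definition nonarch_seminorm (K : fieldType) (R : realType) (abs : K -> R)
  (E : lmodType K) (p : E -> R) : Prop :=
  (forall x y, p (x + y) <= Num.max (p x) (p y)) /\
  (forall (l : K) x, p (l *: x) = abs l * p x).

(* convexity: for all n >= 1 (n = 0 is vacuous since an empty sum is 0 <> 1),
   x_0..x_{n-1} in E, lambda_i in B_K with sum 1,
   phi (sum lambda_i x_i) <= max_i |lambda_i| phi(x_i). *)
Definition nonarch_convex (K : fieldType) (R : realType) (abs : K -> R)
  (E : lmodType K) (phi : E -> R) : Prop :=
  forall (n : nat) (x : 'I_n.+1 -> E) (lam : 'I_n.+1 -> K),
    (forall i, abs (lam i) <= 1) ->
    \sum_(i < n.+1) lam i = 1 ->
    phi (\sum_(i < n.+1) lam i *: x i) <=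
      \big[Num.max/abs (lam ord0) * phi (x ord0)]_(i < n.+1) (abs (lam i) * phi (x i)).

(* Main.v *)
Require Import Defs.
From HB Require Import structures.
From mathcomp Require Import all_boot all_order all_algebra.
From mathcomp Require Import reals.
From mathcomp Require Import lra.
Import Order.TTheory GRing.Theory Num.Theory.
Local Open Scope ring_scope.

Lemma bigmax_ge (R : realType) (I : eqType) (F : I -> R) (x0 : R) (r : seq I) j :
  j \in r -> F j <= \big[Num.max/x0]_(i <- r) F i.
Proof.
elim: r => [//|a r IH]; rewrite inE big_cons => /orP [/eqP ->|jr].
  by rewrite le_max lexx.
by rewrite le_max (IH jr) orbT.
Qed.

Theorem mainTheorem7 (R : realType) (K : fieldType) (abs : K -> R)
  (habs : complete_nonarch_abs abs) (E : lmodType K)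
  (psi : R -> R)
  (psi_le0 : forall t, 0 <= t -> psi t <= 0)
  (psi_mono : forall s t, 0 <= s -> s <= t -> psi s <= psi t)
  (p : E -> R) (hp : nonarch_seminorm abs p) :
  nonarch_convex abs (fun x => psi (p x)).
Proof.
case: hp => pD pZ.
have a0 := abs_ge0 habs.
have p0 : p 0 = 0.
  by rewrite -(scale0r (0 : E)) pZ ((abs_eq0 habs 0).2 erefl) mul0r.
have pge0 : forall x, 0 <= p x.
  move=> x.
  have a1 : abs 1 = 1.
    have h : abs 1 * abs 1 = abs 1 by rewrite -absM // mulr1.
    have nz : abs 1 != 0 by apply/eqP => /(abs_eq0 habs); apply/eqP; exact: oner_neq0.
    by apply: (mulIf nz); rewrite mul1r.
  have aN1 : abs (-1) = 1.
    have h : abs (-1) * abs (-1) = 1 by rewrite -absM // mulrNN mulr1.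
    have := a0 (-1); move: h; set a := abs (-1) => h ha; nra.
  have := pD x (- x); rewrite subrr p0 -scaleN1r pZ aN1 mul1r maxxx.
  by [].
move=> n x lam lam1 _.
pose F := fun i => abs (lam i) * p (x i).
case: (@arg_maxP _ _ 'I_n.+1 ord0 xpredT F erefl) => j _ jmax.
have Fj0 : 0 <= F j by rewrite mulr_ge0.
have hsum : p (\sum_(i < n.+1) lam i *: x i) <= F j.
  apply: (big_ind (fun y => p y <= F j)).
  - by rewrite p0.
  - by move=> a b ha hb; apply: le_trans (pD a b) _; rewrite ge_max ha hb.
  - by move=> i _; rewrite pZ; apply: jmax.
have Fjle : F j <= p (x j) by rewrite /F ler_piMl.
have BM := @bigmax_ge _ _ (fun i => abs (lam i) * psi (p (x i))) (abs (lam ord0) * psi (p (x ord0))) _ _ (mem_index_enum j).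
apply: le_trans BM => /=.
apply: le_trans (psi_mono _ _ (pge0 _) (le_trans hsum Fjle)) _.
have := psi_le0 _ (pge0 (x j)); set v := psi (p (x j)) => hv.
have l1 := lam1 j.
by rewrite -subr_ge0 -{2}[v]mul1r -mulrBl mulr_le0 // subr_le0.
Qed.
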